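(* Let $n\ge9$, let $K$ be an integer with $0\le K\le n/2$, and let $P_K=\min\!\big(\frac{K+\sqrt K}{n},\frac12\big)$. Then, entrywise, $\mathrm{Sen}(\mathcal S)_K\le3e^{20}\cdot\mathrm{Sen}(\tilde{\mathcal N})_{P_K}$.
   Context: Let $\mathbb{I}^n=\{0,1\}^n$ with Hamming distance $d$; operators on $\mathbb{R}^{\mathbb{I}^n}$ are identified with matrices and $A\le B$ means $B-A$ has nonnegative entries. For $0\le k\le n$, $(S_kf)(x)=\binom nk^{-1}\sum_{y:\,d(x,y)=k}f(y)$, and $\mathrm{Sen}(\mathcal S)_K=\frac1{K+1}\sum_{\ell=0}^KS_\ell$. For $p\in[0,1/2]$, $\tilde N_p=\sum_{k=0}^n\binom nkp^k(1-p)^{n-k}S_k$; $\mathrm{Sen}(\tilde{\mathcal N})_P=\frac1P\int_0^P\tilde N_p\,dp$ for $P\in(0,1/2]$, and $\mathrm{Sen}(\tilde{\mathcal N})_0$ is the identity (limit from above). *)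

(* Defs.v *)
From Stdlib Require Import Reals.
From Coquelicot Require Import Coquelicot.
From HB Require Import structures.
From mathcomp Require Import all_boot all_order all_algebra.
From mathcomp Require Import Rstruct.

Set Implicit Arguments.
Unset Strict Implicit.
Unset Printing Implicit Defensive.

Import GRing.Theory.
Local Open Scope ring_scope.

Definition cube (n : nat) := {ffun 'I_n -> bool}.

Definition hdist (n : nat) (x y : cube n) : nat := #|[set i | x i != y i]|.

Definition op (n : nat) := (cube n -> R) -> (cube n -> R).

(* Matrix entry (x,y) of an operator A: (A delta_y)(x). *)
Definition mxop (n : nat) (A : op n) (x y : cube n) : R :=
  A (fun z => if z == y then 1 else 0) x.

Definition S_op (n k : nat) : op n :=
  fun f x => ('C(n, k)%:R)^-1 * \sum_(y : cube n | hdist x y == k) f y.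

Definition SenS (n K : nat) : op n :=
  fun f x => (K.+1%:R)^-1 * \sum_(0 <= l < K.+1) @S_op n l f x.

Definition Ntilde (n : nat) (p : R) : op n :=
  fun f x => \sum_(0 <= k < n.+1)
     'C(n, k)%:R * p ^+ k * (1 - p) ^+ (n - k) * @S_op n k f x.

Definition SenN (n : nat) (P : R) : op n :=
  fun f x => if P == 0 then f x
             else P^-1 * RInt (fun p => @Ntilde n p f x) 0 P.

Definition PK (n K : nat) : R :=
  Rmin ((INR K + sqrt (INR K)) / INR n)%R (1 / 2)%R.

(* Main.v *)
Require Import Defs.
From Stdlib Require Import Reals.
From Coquelicot Require Import Coquelicot.
From HB Require Import structures.
From mathcomp Require Import all_boot all_order all_algebra.
From mathcomp Require Import Rstruct.
From Stdlib Require Import Lra Psatz.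

Section PKsec.
Local Open Scope R_scope.

Lemma ePK n K : PK n K = Rmin ((INR K + sqrt (INR K)) / INR n) (1/2).
Proof. unfold PK; f_equal. Qed.

Lemma PK0 n : PK n 0 = 0.
Proof.
rewrite ePK.
have e : INR 0 + sqrt (INR 0) = 0 by rewrite sqrt_0; simpl; ring.
rewrite e; unfold Rdiv; rewrite Rmult_0_l.
apply Rmin_left; lra.
Qed.

Lemma PK_real (k m : R) : 1 <= k -> 9 <= m -> 2 * k <= m ->
  0 < Rmin ((k + sqrt k) / m) (1/2) /\ 2 * Rmin ((k + sqrt k) / m) (1/2) <= 1 /\
  (k + 1) * (1 - Rmin ((k + sqrt k) / m) (1/2)) <= (m + 1 - k) * Rmin ((k + sqrt k) / m) (1/2) /\
  Rmin ((k + sqrt k) / m) (1/2) * (m + 1) <= 4 * k.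
Proof.
move=> k1 m9 k2m.
have s1 : 1 <= sqrt k by rewrite -sqrt_1; apply sqrt_le_1_alt.
have ss : sqrt k * sqrt k = k by apply sqrt_sqrt; lra.
move: s1 ss; move: (sqrt k) => s s1 ss.
have sk : s <= k by nra.
have hA : (k + s) / m * m = k + s by field; lra.
have A0 : 0 < (k + s) / m by apply Rdiv_lt_0_compat; lra.
move: hA A0; move: ((k + s) / m) => A hA A0.
destruct (Rle_dec A (1/2)) as [hle|hgt].
  rewrite Rmin_left //.
  split; [lra|split; [lra|split]]; nra.
rewrite Rmin_right; last lra.
split; [lra|split; [lra|split]]; nra.
Qed.

Lemma PK_facts n K : (9 <= n)%N -> (2 * K <= n)%N -> (1 <= K)%N ->
  0 < PK n K /\ INR 2 * PK n K <= 1 /\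
  INR K.+1 * (1 - PK n K) <= INR (n.+1 - K) * PK n K /\
  PK n K * INR n.+1 <= INR (4 * K).
Proof.
move=> hn hK hK1.
have k1 : 1 <= INR K by move/leP: hK1 => h; apply le_INR in h; simpl in h; lra.
have m9 : 9 <= INR n.
  move/leP: hn => h; apply le_INR in h.
  replace (INR 9) with 9 in h by (simpl; ring); lra.
have k2m : 2 * INR K <= INR n.
  move/leP: hK => h; apply le_INR in h; rewrite mult_INR in h; simpl in h; lra.
have Kn : (K <= n.+1)%coq_nat.
  apply/leP; apply: leqW; apply: leq_trans hK; by rewrite leq_pmull.
have e1 : INR K.+1 = INR K + 1 := S_INR K.
have e2 : INR (n.+1 - K) = INR n + 1 - INR K by rewrite (minus_INR _ _ Kn) S_INR.
have e3 : INR n.+1 = INR n + 1 := S_INR n.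
have e4 : INR (4 * K) = 4 * INR K by rewrite mult_INR; simpl; ring.
have e5 : INR 2 = 2 by simpl; ring.
rewrite e1 e2 e3 e4 e5 ePK.
exact: PK_real.
Qed.

End PKsec.

From mathcomp Require Import ring lra zify.

Section Helpers.
Import Order.TTheory GRing.Theory Num.Theory.
Local Open Scope ring_scope.

Definition bb (m : nat) (q : R) (j : nat) :=
  'C(m, j)%:R * q ^+ j * (1 - q) ^+ (m - j).

Lemma bb_ge0 m q j : 0 <= q -> q <= 1 -> 0 <= bb m q j.
Proof.
move=> h0 h1; rewrite /bb; apply: mulr_ge0; [apply: mulr_ge0|].
- exact: ler0n.
- exact: exprn_ge0.
- by apply: exprn_ge0; rewrite subr_ge0.
Qed.

Lemma bb_sum m q : \sum_(0 <= j < m.+1) bb m q j = 1.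
Proof.
have := exprDn (1 - q) q m; rewrite subrK expr1n => ->.
rewrite big_mkord; apply: eq_bigr => i _.
by rewrite /bb -[RHS]mulr_natr; ring.
Qed.

Lemma bb_rec m q j : (j < m)%N ->
  bb m q j.+1 * j.+1%:R * (1 - q) = bb m q j * (m - j)%:R * q.
Proof.
move=> hj; rewrite /bb.
have e1 : (m - j = (m - j.+1).+1)%N by rewrite subnSK.
have e2 : ('C(m, j.+1) * j.+1 = 'C(m, j) * (m - j))%N.
  by rewrite mulnC mul_bin_left mulnC.
have e3 : 'C(m, j.+1)%:R * j.+1%:R = 'C(m, j)%:R * (m - j)%:R :> R.
  by rewrite -!natrM e2.
have e4 : (1 - q) ^+ (m - j) = (1 - q) ^+ (m - j.+1) * (1 - q).
  by rewrite e1 exprSr.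
rewrite e4 exprSr.
transitivity (('C(m, j.+1)%:R * j.+1%:R) * q ^+ j * q * (1 - q) ^+ (m - j.+1) * (1 - q)); first ring.
rewrite e3; ring.
Qed.

Lemma bb_refl m q K : 0 <= q -> q <= 1/2 -> (K.*2 < m)%N ->
  K.+1%:R * (1 - q) <= (m - K)%:R * q ->
  forall t, (t <= K)%N -> bb m q (K - t) <= bb m q (K.+1 + t).
Proof.
move=> q0 q2 hm hc.
have q1 : 0 < 1 - q by lra.
have Km : (K < m)%N by move: hm; rewrite -addnn; lia.
set M : R := m%:R; set k : R := K%:R.
have hMK : (m - K)%:R = M - k by rewrite natrB ?(ltnW Km).
rewrite hMK in hc.
have k0 : 0 <= k by apply: ler0n.
have qpos : 0 < q.
  have : 0 < K.+1%:R * (1 - q) by apply: mulr_gt0 => //; rewrite ltr0Sn.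
  move=> h; rewrite lt0r; apply/andP; split => //.
  apply/eqP=> e; move: hc h; rewrite e mulr0; lra.
elim=> [_|t IH ht].
  rewrite subn0 addn0.
  have e := @bb_rec m q K Km; rewrite hMK in e.
  have q1' : q <= 1 by lra.
  have u0 := bb_ge0 m q K q0 q1'.
  have X : 0 < K.+1%:R * (1 - q) by apply: mulr_gt0 => //; rewrite ltr0Sn.
  rewrite -(ler_pM2r X).
  apply: (le_trans (ler_wpM2l u0 hc)).
  by rewrite mulrA -e mulrA.
have tK : (t < K)%N := ht.
have IH' := IH (ltnW ht).
set j := (K - t.+1)%N.
have ej : j.+1 = (K - t)%N by rewrite /j subnSK.
have jm : (j < m)%N by rewrite /j; lia.
have e1 := @bb_rec m q j jm.
rewrite ej in e1.
set i := (K.+1 + t)%N.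
have im : (i < m)%N by rewrite /i; move: hm tK; rewrite -addnn; lia.
have e2 := @bb_rec m q i im.
have ei : i.+1 = (K.+1 + t.+1)%N by rewrite /i addnS.
rewrite ei in e2.
set s : R := t.+1%:R.
have c1 : (K - t)%:R = k - s + 1.
  rewrite natrB ?(ltnW tK) // /s /k -natr1; ring.
have c2 : (m - j)%:R = M - k + s.
  rewrite natrB ?(ltnW jm) // /j natrB // /s /k /M; ring.
have c3 : (K.+1 + t.+1)%:R = k + 1 + s.
  rewrite natrD /s /k -natr1; ring.
have c4 : (m - i)%:R = M - k - s.
  rewrite natrB ?(ltnW im) // /i natrD /s /k /M -natr1 -(natr1 t); ring.
rewrite c1 c2 in e1; rewrite c3 c4 in e2.
have q1' : q <= 1 by lra.
have u0 := bb_ge0 m q j q0 q1'.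
have w0 := bb_ge0 m q i q0 q1'.
have z0 := bb_ge0 m q (K.+1 + t.+1) q0 q1'.
have s1 : 1 <= s by rewrite /s ler1n.
have sk : s <= k by rewrite /s /k ler_nat.
have hmr : 2 * k + 1 <= M.
  rewrite /k /M -natrM natr1 ler_nat; move: hm; rewrite -addnn; lia.
move: e1 e2 IH'; set u := bb m q j; set v := bb m q (K - t);
  set w := bb m q i; set z := bb m q (K.+1 + t.+1) => e1 e2 IH'.
have h3 : (k - s + 1) * (k + 1 + s) * (1 - q) ^+ 2 <= (M - k + s) * (M - k - s) * q ^+ 2.
  have A0 : 0 <= (k + 1) * (1 - q) by nra.
  have AB : ((k + 1) * (1 - q)) ^+ 2 <= ((M - k) * q) ^+ 2.
    rewrite -natr1 in hc. nra.
  have : s ^+ 2 * q ^+ 2 <= s ^+ 2 * (1 - q) ^+ 2 by nra.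
  nra.
have X : 0 < (M - k + s) * q * (k + 1 + s) * (1 - q) by do 3 (apply: mulr_gt0; try lra); lra.
rewrite -(ler_pM2r X).
have L1 : u * ((M - k + s) * q * (k + 1 + s) * (1 - q)) = v * ((k - s + 1) * (k + 1 + s) * (1 - q) ^+ 2).
  transitivity ((u * (M - k + s) * q) * (k + 1 + s) * (1 - q)); first ring.
  rewrite -e1; ring.
have L2 : z * ((M - k + s) * q * (k + 1 + s) * (1 - q)) = w * ((M - k + s) * (M - k - s) * q ^+ 2).
  transitivity ((z * (k + 1 + s) * (1 - q)) * (M - k + s) * q); first ring.
  rewrite e2; ring.
rewrite L1 L2.
have P0 : 0 <= (k - s + 1) * (k + 1 + s) * (1 - q) ^+ 2 by apply: mulr_ge0; [apply: mulr_ge0; lra | apply: exprn_ge0; lra].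
apply: (le_trans (ler_wpM2r P0 IH')).
exact: ler_wpM2l.
Qed.

Lemma bb_tail m q K : 0 <= q -> q <= 1/2 -> (K.*2 < m)%N ->
  K.+1%:R * (1 - q) <= (m - K)%:R * q ->
  1/2 <= \sum_(K.+1 <= j < m.+1) bb m q j.
Proof.
move=> q0 q2 hm hc.
have q1 : q <= 1 by lra.
have Km : (K.+1 <= m.+1)%N by move: hm; rewrite -addnn; lia.
have h1 := bb_sum m q.
rewrite (big_cat_nat (leq0n K.+1) Km) /= in h1.
have h2 : \sum_(0 <= j < K.+1) bb m q j <= \sum_(K.+1 <= j < m.+1) bb m q j.
  rewrite big_nat_rev /=.
  have -> : \sum_(0 <= i < K.+1) bb m q (0 + K.+1 - i.+1) = \sum_(0 <= i < K.+1) bb m q (K - i).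
    by apply: eq_bigr => i _; rewrite add0n subSS.
  have hK2 : (K.+1 <= K.+1 + K.+1)%N by lia.
  have hK3 : (K.+1 + K.+1 <= m.+1)%N by move: hm; rewrite -addnn; lia.
  rewrite (big_cat_nat hK2 hK3) /=.
  have r0 : 0 <= \sum_(K.+1 + K.+1 <= i < m.+1) bb m q i.
    by apply: sumr_ge0 => i _; apply: bb_ge0.
  suff : \sum_(0 <= i < K.+1) bb m q (K - i) <= \sum_(K.+1 <= i < K.+1 + K.+1) bb m q i by lra.
  rewrite (big_addn 0 _ K.+1) addnK.
  rewrite !big_mkord; apply: ler_sum => i _.
  rewrite addnC; apply: bb_refl => //; by rewrite -ltnS.
lra.
Qed.

Lemma is_derive_mon (c : R) a b x :
  is_derive (fun p : R => c * p ^+ a * (1 - p) ^+ b) x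
    (c * (a%:R * x ^+ a.-1 * (1 - x) ^+ b - b%:R * x ^+ a * (1 - x) ^+ b.-1)).
Proof.
apply: (is_derive_ext (fun p => Rmult (Rmult c (pow p a)) (pow (Rminus 1 p) b))).
  by move=> t; rewrite !RpowE !RmultE RminusE.
auto_derive => //.
rewrite !RpowE !RmultE !RplusE !RoppE !INRE.
change (IZR 1) with (@GRing.one R).
move: (x : R) => y.

ring.
Qed.

Lemma is_derive_sum (F : nat -> R -> R) (F' : nat -> R) a b x :
  (forall i, is_derive (F i) x (F' i)) ->
  is_derive (fun p => \sum_(a <= i < b) F i p) x (\sum_(a <= i < b) F' i).
Proof.
move=> H; elim: b => [|b IH].
  apply: (is_derive_ext (fun _ => @GRing.zero R)) => [t|]; first by rewrite big_geq.
  rewrite big_geq //; exact: is_derive_const.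
case: (leqP a b) => hab.
  apply: (is_derive_ext (fun p => \sum_(a <= i < b) F i p + F b p)) => [t|].
    by rewrite big_nat_recr.
  rewrite big_nat_recr //=; exact: is_derive_plus IH (H b).
apply: (is_derive_ext (fun _ => @GRing.zero R)) => [t|]; first by rewrite big_geq.
rewrite big_geq //; exact: is_derive_const.
Qed.

Lemma is_derive_term n i x :
  is_derive (fun p => bb n.+1 p i.+1) x (n.+1%:R * (bb n x i - bb n x i.+1)).
Proof.
have H := is_derive_mon 'C(n.+1, i.+1)%:R i.+1 (n.+1 - i.+1) x.
suff -> : n.+1%:R * (bb n x i - bb n x i.+1) =
  'C(n.+1, i.+1)%:R * (i.+1%:R * x ^+ i.+1.-1 * (1 - x) ^+ (n.+1 - i.+1) -
     (n.+1 - i.+1)%:R * x ^+ i.+1 * (1 - x) ^+ (n.+1 - i.+1).-1) by exact: H.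
rewrite subSS /= -subnS /bb.
have e1 : n.+1%:R * 'C(n, i)%:R = i.+1%:R * 'C(n.+1, i.+1)%:R :> R.
  by rewrite -!natrM (mul_bin_diag n.+1 i).
have e2 : n.+1%:R * 'C(n, i.+1)%:R = (n - i)%:R * 'C(n.+1, i.+1)%:R :> R.
  by rewrite -!natrM (mul_bin_down n.+1 i.+1) subSS.
transitivity ((n.+1%:R * 'C(n, i)%:R) * (x ^+ i * (1 - x) ^+ (n - i)) -
   (n.+1%:R * 'C(n, i.+1)%:R) * (x ^+ i.+1 * (1 - x) ^+ (n - i.+1))); first ring.
rewrite e1 e2; ring.
Qed.

Lemma RInt_mono n d P : (d <= n)%N ->
  RInt (fun p => p ^+ d * (1 - p) ^+ (n - d)) 0 P =
  (\sum_(d <= i < n.+1) bb n.+1 P i.+1) / (n.+1%:R * 'C(n, d)%:R).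
Proof.
move=> hd.
set N := n.+1%:R * 'C(n, d)%:R.
have N0 : N != 0 :> R.
  by rewrite /N -natrM pnatr_eq0 muln_eq0 negb_or /= -lt0n bin_gt0.
apply: is_RInt_unique.
set f := fun p => (\sum_(d <= i < n.+1) bb n.+1 p i.+1) * N^-1.
have Hd : forall x, is_derive f x (x ^+ d * (1 - x) ^+ (n - d)).
  move=> x.
  have D := @is_derive_sum (fun i p => bb n.+1 p i.+1)
     (fun i => n.+1%:R * (bb n x i - bb n x i.+1)) d n.+1 x (fun i => is_derive_term n i x).
  have D2 := @is_derive_scal_l _ R_NormedModule _ _ _ (N^-1) D.
  suff <- : scal (\sum_(d <= i < n.+1) (n.+1%:R * (bb n x i - bb n x i.+1))) N^-1 = x ^+ d * (1 - x) ^+ (n - d) by exact: D2.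
  change ((\sum_(d <= i < n.+1) (n.+1%:R * (bb n x i - bb n x i.+1))) * N^-1 = x ^+ d * (1 - x) ^+ (n - d)).
  rewrite -mulr_sumr (@telescope_sumr_eq _ d n.+1 (fun k => - bb n x k) _ (leqW hd)); last first.
    by move=> k _; ring.
  have -> : bb n x n.+1 = 0 by rewrite /bb bin_small // mul0r mul0r.
  apply: (mulIf N0); rewrite mulrVK // /N /bb; ring.
have -> : (\sum_(d <= i < n.+1) bb n.+1 P i.+1) / N = minus (f P) (f 0).
  have f0 : f 0 = 0.
    rewrite /f big1 ?mul0r // => i _; rewrite /bb expr0n /=; ring.
  rewrite f0; change ((\sum_(d <= i < n.+1) bb n.+1 P i.+1) / N = f P - 0).
  by rewrite subr0.
apply: is_RInt_derive => x _; first exact: Hd.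
apply: ex_derive_continuous.
exists (1 * (d%:R * x ^+ d.-1 * (1 - x) ^+ (n - d) - (n - d)%:R * x ^+ d * (1 - x) ^+ (n - d).-1)).
apply: (is_derive_ext (fun p : R => 1 * p ^+ d * (1 - p) ^+ (n - d))) => [t|].
  by rewrite mul1r.
exact: is_derive_mon.
Qed.

Lemma hdist_le n (x y : cube n) : (hdist x y <= n)%N.
Proof.
by rewrite /hdist; apply: leq_trans (max_card _) _; rewrite card_ord.
Qed.

Lemma hdist0 n (x y : cube n) : hdist x y = 0%N -> x = y.
Proof.
rewrite /hdist => /cards0_eq h; apply/ffunP => i.
apply/eqP; apply: negbNE; apply/negP => hi.
have : i \in [set i | x i != y i] by rewrite inE.
by rewrite h inE.
Qed.

Lemma S_delta n k (x y : cube n) :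
  S_op k (fun z => if z == y then 1 else 0) x =
  ('C(n, k)%:R)^-1 * (if hdist x y == k then 1 else 0).
Proof.
rewrite /S_op; congr (_ * _).
case h: (hdist x y == k).
  rewrite (bigD1 y) //= eqxx big1 ?addr0 // => z /andP [_ hz].
  by rewrite (negbTE hz).
apply: big1 => z hz; case: eqP => // e.
by rewrite e h in hz.
Qed.

Lemma N_delta n p (x y : cube n) :
  @Ntilde n p (fun z => if z == y then 1 else 0) x =
  p ^+ hdist x y * (1 - p) ^+ (n - hdist x y).
Proof.
rewrite /Ntilde.
set d := hdist x y.
have dn : (d <= n)%N by exact: hdist_le.
have Cd : ('C(n, d)%:R : R) != 0 by rewrite pnatr_eq0 -lt0n bin_gt0.
rewrite (eq_bigr (fun k => if k == d then p ^+ d * (1 - p) ^+ (n - d) else 0)); last first.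
  move=> k _; rewrite S_delta -/d eq_sym.
  case: eqP => [->|_]; last by rewrite !mulr0.
  by rewrite mulr1 [_ * _^-1]mulrC !mulrA mulVf // mul1r.
by rewrite -big_mkcond big_nat1_eq /= ltnS dn.
Qed.

Lemma SenS_delta n K (x y : cube n) :
  mxop (@SenS n K) x y =
  if (hdist x y <= K)%N then (K.+1%:R)^-1 * ('C(n, hdist x y)%:R)^-1 else 0.
Proof.
rewrite /mxop /SenS.
set d := hdist x y.
rewrite (eq_bigr (fun l => if l == d then ('C(n, d)%:R)^-1 else 0)); last first.
  move=> l _; rewrite S_delta -/d eq_sym.
  by case: eqP => [->|_]; rewrite ?mulr1 ?mulr0.
rewrite -big_mkcond big_nat1_eq /= ltnS.
by case: (d <= K)%N; rewrite ?mulr0.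
Qed.

Lemma IZR_nat k : IZR (Z.of_nat k) = k%:R.
Proof. by rewrite -INR_IZR_INZ INRE. Qed.

Lemma IZR0 : IZR 0 = 0 :> R. Proof. exact: (IZR_nat 0). Qed.
Lemma IZR1 : IZR 1 = 1 :> R. Proof. exact: (IZR_nat 1). Qed.

End Helpers.

Theorem lemma6 (n K : nat) :
  (9 <= n)%N -> (2 * K <= n)%N ->
  forall x y : cube n,
    (@mxop n (@SenS n K) x y <= 3 * exp 20 * @mxop n (@SenN n (PK n K)) x y)%R.
Proof.
move=> hn hK x y.
Import Order.TTheory GRing.Theory Num.Theory.
Local Open Scope ring_scope.
set ex := exp 20.
have hex : 21%:R < ex.
  have := exp_ineq1 20 ltac:(discrR); move/RltP; rewrite RplusE => h.
  have e20 : IZR 1 + IZR 20 = 21%:R :> R by rewrite (IZR_nat 1) (IZR_nat 20) -natrD.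
  by rewrite -e20.
rewrite SenS_delta /mxop /SenN.
set d := hdist x y; set P := PK n K.
have dn : (d <= n)%N by exact: hdist_le.
case: (posnP K) => [K0|Kpos].
  have P0 : P = 0.
    by rewrite /P K0 PK0.
  rewrite P0 eqxx.
  case hd: (d <= K)%N.
    have d0 : d = 0%N by move: hd; rewrite K0; lia.
    rewrite (@hdist0 n x y d0) eqxx d0 bin0 K0 invr1 mulr1 mulr1; lra.
  case: (x == y); lra.
have [HP0 [HP2 [HPc HPn]]] := @PK_facts n K hn hK Kpos.
rewrite -/P in HP0 HP2 HPc HPn.
move/RltP: HP0; rewrite IZR0 => HP0.
move/RleP: HP2; rewrite RmultE INRE IZR1 => HP2.
move/RleP: HPc; rewrite !RmultE !INRE RminusE IZR1 => HPc.
move/RleP: HPn; rewrite !RmultE !INRE natrM => HPn.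
have Pn0 : P != 0 by rewrite gt_eqF.
rewrite (negbTE Pn0).
rewrite (@RInt_ext _ _ (fun p => p ^+ d * (1 - p) ^+ (n - d))); last first.
  by move=> t _; rewrite N_delta.
rewrite RInt_mono //.
set G := \sum_(d <= i < n.+1) bb n.+1 P i.+1.
have P1 : P <= 1 by lra.
have G0 : 0 <= G by apply: sumr_ge0 => i _; apply: bb_ge0; lra.
have Cpos : (0 : R) < 'C(n, d)%:R by rewrite ltr0n bin_gt0.
have N1pos : (0 : R) < n.+1%:R by rewrite ltr0n.
case hd: (d <= K)%N; last first.
  apply: mulr_ge0; first lra.
  apply: mulr_ge0; first by rewrite invr_ge0; lra.
  apply: divr_ge0; first exact: G0.
  by apply: mulr_ge0; apply: ltW.
have G2 : 1/2 <= G.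
  have hK1 : (K <= n.+1)%N by lia.
  rewrite /G (big_cat_nat hd hK1) /=.
  have r0 : 0 <= \sum_(d <= i < K) bb n.+1 P i.+1.
    by apply: sumr_ge0 => i _; apply: bb_ge0; lra.
  suff : 1/2 <= \sum_(K <= i < n.+1) bb n.+1 P i.+1 by lra.
  have -> : \sum_(K <= i < n.+1) bb n.+1 P i.+1 = \sum_(K.+1 <= j < n.+2) bb n.+1 P j.
    transitivity (\sum_(K <= i < n.+2 - 1) bb n.+1 P (i + 1)).
      by rewrite subn1 /=; apply: eq_bigr => i _; rewrite addn1.
    rewrite -[K.+1]addn1; exact: (esym (big_addn K n.+2 1 xpredT (bb n.+1 P))).
  apply: bb_tail; first lra; first lra.
    by rewrite -muln2 mulnC; lia.
  exact: HPc.
set C := 'C(n, d)%:R; set N1 := n.+1%:R.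
move: HPn; rewrite -/N1 => HPn.
have k1 : 1 <= K%:R :> R by rewrite ler1n.
have eK : K.+1%:R = K%:R + 1 :> R by rewrite natr1.
rewrite eK.
have PN : 0 < P * N1 by apply: mulr_gt0.
have eq : 3 * ex * (P^-1 * (G / (N1 * C))) = (3 * ex * G / (P * N1)) / C.
  field; apply/and3P; split; [by rewrite (gt_eqF Cpos) | by rewrite gt_eqF // addrC natr1 ltr0n | exact: Pn0].
rewrite eq ler_pM2r ?invr_gt0 // ler_pdivlMr // mulrC ler_pdivrMr; last lra.
have h10 : 10 <= ex * G by nra.
nra.
Qed.
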